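(* Let $G$ be a bipartite permutation graph and let $M$ be a matching in $G$. The following are equivalent: (i) $M$ is uniquely restricted; (ii) there is no alternating cycle of length 4 with respect to $M$ in $G$; (iii) for any two edges $e,e'\in M$, $\{e,e'\}$ is a uniquely restricted matching in $G$.
   Context: Graphs are finite, simple, undirected. For a permutation $\pi$ of $\{1,\dots,n\}$, $G_\pi$ has vertex set $\{1,\dots,n\}$ and edges $ij$ with $(i-j)(\pi(i)-\pi(j))<0$; a permutation graph is a graph isomorphic to some $G_\pi$, and a bipartite permutation graph is a bipartite permutation graph. A matching is a set of pairwise vertex-disjoint edges; it is uniquely restricted if no other matching of $G$ matches exactly the same vertex set. An alternating cycle with respect to $M$ is an even cycle of $G$ in which every second edge belongs to $M$. *)

(* Defs.v *)
From mathcomp Require Import all_boot all_order all_algebra all_fingroup.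
Set Implicit Arguments. Unset Strict Implicit. Unset Printing Implicit Defensive.
Import Order.TTheory GRing.Theory Num.Theory.

(* A finite simple graph on vertex type T is a symmetric irreflexive e : rel T.
   Edges are the 2-element vertex sets {x, y} with e x y. *)

Definition is_edge (T : finType) (e : rel T) (s : {set T}) : bool :=
  [exists x, exists y, e x y && (s == [set x; y])].

(* G_pi on vertex set {0,...,n-1} (0-based indexing of {1,...,n}). *)
Definition perm_edge (n : nat) (p : 'S_n) (i j : 'I_n) : bool :=
  (((i : nat)%:Z - (j : nat)%:Z) * (((p i : nat)%:Z) - ((p j : nat)%:Z)) < 0)%R.

Definition permutation_graph (T : finType) (e : rel T) : Prop :=
  exists (n : nat) (p : 'S_n) (f : T -> 'I_n),
    bijective f /\ forall x y, e x y = perm_edge p (f x) (f y).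

Definition bipartite (T : finType) (e : rel T) : Prop :=
  exists A : {set T}, forall x y, e x y -> (x \in A) != (y \in A).

Definition matching (T : finType) (e : rel T) (M : {set {set T}}) : Prop :=
  (forall s, s \in M -> is_edge e s) /\
  (forall s t, s \in M -> t \in M -> s != t -> [disjoint s & t]).

Definition uniquely_restricted (T : finType) (e : rel T) (M : {set {set T}}) : Prop :=
  matching e M /\
  forall M', matching e M' -> cover M' = cover M -> M' = M.

Definition alt_cycle4 (T : finType) (e : rel T) (M : {set {set T}}) : Prop :=
  exists a b c d : T,
    [/\ uniq [:: a; b; c; d],
        [&& e a b, e b c, e c d & e d a],
        [set a; b] \in M & [set c; d] \in M].

(* Main.v *)
Require Import Defs.
From mathcomp Require Import all_boot all_order all_algebra all_fingroup.
From mathcomp Require Import zify.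
Set Implicit Arguments. Unset Strict Implicit. Unset Printing Implicit Defensive.

Lemma disjP (T : finType) (A B : {set T}) :
  (forall z, z \in A -> z \in B -> False) -> [disjoint A & B].
Proof.
move=> H; rewrite disjoints_subset; apply/subsetP => z zA; rewrite inE.
by apply/negP => zB; exact: (H z zA zB).
Qed.

Section Gen.
Variable T : finType.
Variable e : rel T.
Hypothesis esym : symmetric e.
Hypothesis eirr : irreflexive e.

Lemma same_edge N s t x : matching e N -> s \in N -> t \in N -> x \in s -> x \in t -> s = t.
Proof.
move=> [_ Hd] sN tN xs xt; apply/eqP; apply/negPn/negP => st.
by move: (disjointFr (Hd s t sN tN st) xs); rewrite xt.
Qed.

Lemma edge_other s v : is_edge e s -> v \in s -> exists w, s = [set v; w] /\ e v w.
Proof.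
move=> /existsP [x /existsP [y /andP [exy /eqP ->]]].
rewrite !inE => /orP [/eqP -> | /eqP ->]; first by exists y.
exists x; split; [exact: setUC | by rewrite esym].
Qed.

Lemma swap_c4 M : matching e M -> alt_cycle4 e M -> ~ uniquely_restricted e M.
Proof.
move=> HM [a [b [c [d [U /and4P [eab ebc ecd eda] Hab Hcd]]]]] [_ UR].
have [Me Md] := HM.
move: U => /=; rewrite !inE !negb_or => /andP [/andP [ab /andP [ac ad]] /andP [/andP [bc bd] /andP [cd _]]].
set M' := (M :\: [set [set a; b]; [set c; d]]) :|: [set [set b; c]; [set d; a]].
have notin s x y : s \in M -> s != [set x; y] -> [set x; y] \in M -> x \notin s /\ y \notin s.
  move=> sM sn xyM; have D := Md _ _ sM xyM sn.
  by split; apply/negP => xs; move: (disjointFr D xs); rewrite !inE eqxx ?orbT.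
have HM' : matching e M'.
  split.
  - move=> s; rewrite !inE => /orP [/andP [_ sM] | /orP [/eqP -> | /eqP ->]]; first exact: Me.
    + by apply/existsP; exists b; apply/existsP; exists c; rewrite ebc eqxx.
    + by apply/existsP; exists d; apply/existsP; exists a; rewrite eda eqxx.
  - have oldnew s x y : s \in M -> s != [set a; b] -> s != [set c; d] ->
        x \in [:: a; b; c; d] -> y \in [:: a; b; c; d] -> [disjoint s & [set x; y]].
      move=> sM s1 s2 xin yin; apply: disjP => z zs; rewrite !inE => /orP [] /eqP zE; subst z.
      + move: xin; rewrite !inE => /or4P [] /eqP xE; subst x.
        * by case: (notin _ _ _ sM s1 Hab); rewrite zs.
        * by case: (notin _ _ _ sM s1 Hab); rewrite zs.
        * by case: (notin _ _ _ sM s2 Hcd); rewrite zs.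
        * by case: (notin _ _ _ sM s2 Hcd); rewrite zs.
      + move: yin; rewrite !inE => /or4P [] /eqP xE; subst y.
        * by case: (notin _ _ _ sM s1 Hab); rewrite zs.
        * by case: (notin _ _ _ sM s1 Hab); rewrite zs.
        * by case: (notin _ _ _ sM s2 Hcd); rewrite zs.
        * by case: (notin _ _ _ sM s2 Hcd); rewrite zs.
    have nn : [disjoint [set b; c] & [set d; a]].
      apply: disjP => z; rewrite !inE => /orP [] /eqP -> /orP [] /eqP E;
        by move: ab ac ad bc bd cd; rewrite E ?eqxx //= ?(eq_sym a).
    have in4 : [/\ a \in [:: a; b; c; d], b \in [:: a; b; c; d], c \in [:: a; b; c; d] & d \in [:: a; b; c; d]].
      by rewrite !inE !eqxx ?orbT.
    case: in4 => ia ib ic id.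
    move=> s t; rewrite !inE => /orP [/andP [/norP [s1 s2] sM] | /orP [] /eqP ->];
      move=> /orP [/andP [/norP [t1 t2] tM] | /orP [] /eqP ->] //; rewrite ?eqxx //.
    + by move=> st; apply: Md.
    + by move=> _; apply: oldnew.
    + by move=> _; apply: oldnew.
    + by move=> _; rewrite disjoint_sym; apply: oldnew.
    + by move=> _; rewrite disjoint_sym; apply: oldnew.
    + by move=> _; rewrite disjoint_sym.
have Hc : cover M' = cover M.
  apply/setP => x; apply/bigcupP/bigcupP => [[S SM' xS] | [S SM xS]].
  - move: SM' xS; rewrite !inE => /orP [/andP [_ SM] xS | /orP [] /eqP -> ]; first by exists S.
    + by rewrite !inE => /orP [] /eqP ->; [exists [set a; b] | exists [set c; d]]; rewrite // !inE eqxx ?orbT.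
    + by rewrite !inE => /orP [] /eqP ->; [exists [set c; d] | exists [set a; b]]; rewrite // !inE eqxx ?orbT.
  - case: (boolP (S \in [set [set a; b]; [set c; d]])) => HS.
    + move: HS xS; rewrite !inE => /orP [] /eqP ->; rewrite !inE => /orP [] /eqP ->.
      * by exists [set d; a]; rewrite !inE eqxx ?orbT.
      * by exists [set b; c]; rewrite !inE eqxx ?orbT.
      * by exists [set b; c]; rewrite !inE eqxx ?orbT.
      * by exists [set d; a]; rewrite !inE eqxx ?orbT.
    + by exists S => //; rewrite !inE SM andbT; move: HS; rewrite !inE => ->.
have := UR M' HM' Hc => EM.
have bcM : [set b; c] \in M by rewrite -EM !inE eqxx ?orbT.
have := same_edge HM bcM Hab (x:=b); rewrite !inE !eqxx orbT => /(_ isT isT) E.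
have : c \in [set a; b] by rewrite -E !inE eqxx orbT.
by rewrite !inE (eq_sym c a) (negbTE ac) (eq_sym c b) (negbTE bc).
Qed.
End Gen.

Section Main.
Variable T : finType.
Variable e : rel T.
Hypothesis esym : symmetric e.
Hypothesis eirr : irreflexive e.
Variables X Y : T -> nat.
Hypothesis Xinj : injective X.
Hypothesis Yinj : injective Y.
Definition nw x y := (X x < X y) && (Y y < Y x).
Hypothesis eE : forall x y, e x y = nw x y || nw y x.
Hypothesis nochain : forall x y z, nw x y -> nw y z -> False.

Lemma nw_irr x : nw x x = false.
Proof. by rewrite /nw ltnn. Qed.

Lemma orient N s : matching e N -> s \in N -> exists t b, nw t b /\ s = [set t; b].
Proof.
move=> [Ne _] /Ne /existsP [x /existsP [y /andP [exy /eqP ->]]].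
move: exy; rewrite eE => /orP [h | h]; first by exists x, y.
by exists y, x; split => //; exact: setUC.
Qed.

Lemma nonadj x y : x != y -> ~~ nw x y -> ~~ nw y x -> X x < X y -> Y x < Y y.
Proof.
move=> xy h1 h2 lt.
have: Y x != Y y by rewrite (inj_eq Yinj).
by move: h1 h2; rewrite /nw lt /= -!leqNgt; lia.
Qed.

Lemma sets_neq t1 b1 t2 b2 : nw t1 b1 -> nw t2 b2 -> t1 != t2 -> [set t1; b1] != [set t2; b2].
Proof.
move=> h1 h2 t12; apply/negP => /eqP E.
have: t1 \in [set t2; b2] by rewrite -E !inE eqxx.
have: t2 \in [set t1; b1] by rewrite E !inE eqxx.
rewrite !inE (eq_sym t2) (negbTE t12) /= => /eqP e2 /eqP e1; subst.
by move: h1 h2; rewrite /nw; lia.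
Qed.

Lemma mkc4 M t1 b1 t2 b2 : matching e M -> [set t1; b1] \in M -> [set t2; b2] \in M ->
  [set t1; b1] != [set t2; b2] -> nw t1 b1 -> nw t2 b2 -> nw t1 b2 -> nw t2 b1 ->
  alt_cycle4 e M.
Proof.
move=> HM s1 s2 sn h11 h22 h12 h21.
have dis x : x \in [set t1; b1] -> x \in [set t2; b2] -> False.
  by move=> x1 x2; move: sn; rewrite (same_edge HM s1 s2 x1 x2) eqxx.
exists t1, b1, t2, b2; split.
- have ne x y : nw x y -> x != y by move=> h; apply/eqP => E; subst; rewrite nw_irr in h.
  rewrite /= !inE !negb_or (ne _ _ h11) (ne _ _ h22) /= !andbT.
  have nn x y : x \in [set t1; b1] -> y \in [set t2; b2] -> x != y.
    by move=> xi yi; apply/eqP => E; subst; exact: dis xi yi.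
  by rewrite !nn ?inE ?eqxx ?orbT.
- by rewrite !eE h11 h22 h12 h21 !orbT.
- done.
- done.
Qed.

Lemma partner M M' s v : matching e M -> matching e M' -> cover M' = cover M ->
  s \in M :\: M' -> v \in s ->
  exists w r, [/\ [set v; w] \in M', [set v; w] \notin M, e v w, r \in M :\: M' & w \in r].
Proof.
move=> HM HM' Hc; rewrite inE => /andP [sM' sM] vs.
have : v \in cover M' by rewrite Hc; apply/bigcupP; exists s.
move=> /bigcupP [s' s'M' vs'].
have [w [Es' evw]] := edge_other esym (HM'.1 _ s'M') vs'.
have s'nM : s' \notin M.
  apply/negP => s'M; move: sM'; by rewrite (same_edge HM sM s'M vs vs') s'M'.
have : w \in cover M by rewrite -Hc; apply/bigcupP; exists s' => //; rewrite Es' !inE eqxx orbT.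
move=> /bigcupP [r rM wr].
exists w, r; split; rewrite -?Es' //.
rewrite inE rM andbT; apply/negP => rM'.
have := same_edge HM' rM' s'M' wr; rewrite Es' !inE eqxx orbT => /(_ isT) E.
by move: s'nM; rewrite Es' -E rM.
Qed.

Lemma main M M' : matching e M -> ~ alt_cycle4 e M -> matching e M' ->
  cover M' = cover M -> M' = M.
Proof.
move=> HM noc HM' Hc; apply/eqP; apply/negPn/negP => neq.
have [s0 s0E] : exists s0, s0 \in M :\: M'.
  case: (set_0Vmem (M :\: M')) => [E0|[s0 h]]; last by exists s0.
  exfalso; have sub : M \subset M' by rewrite -setD_eq0 E0.
  have : ~~ (M' \subset M) by move: neq; rewrite eqEsubset sub andbT.
  move=> /subsetPn [s' s'M' s'nM].
  have := HM'.1 _ s'M' => /existsP [x /existsP [y /andP [_ /eqP Es]]].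
  have xs : x \in s' by rewrite Es !inE eqxx.
  have : x \in cover M by rewrite -Hc; apply/bigcupP; exists s'.
  move=> /bigcupP [r rM xr].
  have := same_edge HM' ((subsetP sub) _ rM) s'M' xr xs => E.
  by move: s'nM; rewrite -E rM.
pose P n := [exists t, exists b, ([set t; b] \in M :\: M') && nw t b && (X t == n)].
have exP : exists n, P n.
  have s0M : s0 \in M by move: s0E; rewrite inE => /andP [].
  have [t [b [h E]]] := orient HM s0M.
  by exists (X t); apply/existsP; exists t; apply/existsP; exists b; rewrite -E s0E h eqxx.
case: (ex_minnP exP) => m /existsP [u /existsP [l0 /andP [/andP [s0E' hul0] /eqP Xu]]] Hmin.
have minX t b : [set t; b] \in M :\: M' -> nw t b -> X u <= X t.
  move=> tE htb; rewrite Xu; apply: Hmin; apply/existsP; exists t; apply/existsP; exists b.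
  by rewrite tE htb eqxx.
have s0M : [set u; l0] \in M by move: s0E'; rewrite inE => /andP [].
have s0nM' : [set u; l0] \notin M' by move: s0E'; rewrite inE => /andP [].
have [a [ra [uaM' uanM eua raE ara]]] :=
  partner HM HM' Hc s0E' (v:=u) (ltac:(by rewrite !inE eqxx)).
have raM : ra \in M by move: raE; rewrite inE => /andP [].
have [ta [ba [htaba Era]]] := orient HM raM.
have hua : nw u a.
  by move: eua; rewrite eE => /orP [//| h]; exfalso; exact: nochain h hul0.
have aba : a = ba.
  move: ara; rewrite Era !inE => /orP [/eqP aE | /eqP //].
  by exfalso; subst; exact: nochain hua htaba.
subst ba.
have [k [rk [lkM' lknM elk rkE krk]]] :=
  partner HM HM' Hc s0E' (v:=l0) (ltac:(by rewrite !inE eqxx orbT)).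
have rkM : rk \in M by move: rkE; rewrite inE => /andP [].
have [tk [bk [htkbk Erk]]] := orient HM rkM.
have hkl : nw k l0.
  by move: elk; rewrite eE => /orP [h | //]; exfalso; exact: nochain hul0 h.
have ktk : k = tk.
  move: krk; rewrite Erk !inE => /orP [/eqP // | /eqP kE].
  by exfalso; subst; exact: nochain htkbk hkl.
subst tk.
rewrite Era in raE raM; rewrite Erk in rkE rkM.
have uta : u != ta.
  apply/eqP => E; subst ta.
  have := same_edge HM s0M raM (x:=u); rewrite !inE !eqxx => /(_ isT isT) E.
  by move: uanM; rewrite -E s0M.
have uk : u != k.
  apply/eqP => E; subst k.
  by move: lknM; rewrite setUC s0M.
have Xuta : X u < X ta.
  have := minX _ _ raE htaba; rewrite leq_eqVlt => /orP [/eqP /Xinj E | //].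
  by move: uta; rewrite E eqxx.
have Xuk : X u <= X k := minX _ _ rkE htkbk.
have nwt x y : nw x y -> X x < X y /\ Y y < Y x by move=> /andP [h1 h2].
case: (leqP (X ta) (X k)) => hk.
- have Yuta : Y u < Y ta.
    apply: nonadj => //; apply/negP => h.
    + exact: nochain h htaba.
    + exact: nochain h hul0.
  apply: noc; apply: (mkc4 HM s0M raM (sets_neq hul0 htaba uta) hul0 htaba hua).
  move: (nwt _ _ hkl) (nwt _ _ hul0) => [Xkl Ykl] [Xul Ylu].
  by rewrite /nw (leq_ltn_trans hk Xkl) (ltn_trans Ylu Yuta).
- have kta : k != ta by apply/eqP => E; subst; rewrite ltnn in hk.
  have bka : bk != a.
    apply/eqP => E; subst bk.
    have := same_edge HM rkM raM (x:=a); rewrite !inE !eqxx !orbT => /(_ isT isT) E.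
    by move: (sets_neq htkbk htaba kta); rewrite E eqxx.
  have Xbka : X bk < X a.
    rewrite ltn_neqAle (inj_eq Xinj) bka /= leqNgt; apply/negP => lt.
    have Ykta : Y k < Y ta.
      apply: nonadj => //; apply/negP => h.
      + exact: nochain h htaba.
      + exact: nochain h htkbk.
    have Yabk : Y a < Y bk.
      apply: nonadj => //; first by rewrite eq_sym.
      + by apply/negP => h; exact: nochain htaba h.
      + by apply/negP => h; exact: nochain htkbk h.
    apply: noc; apply: (mkc4 HM rkM raM (sets_neq htkbk htaba kta) htkbk htaba).
    + move: (nwt _ _ htkbk) (nwt _ _ htaba) => [Xkb Ybk] [Xta Yta].
      by rewrite /nw (ltn_trans hk Xta) (ltn_trans Yabk Ybk).
    + move: (nwt _ _ htkbk) (nwt _ _ htaba) => [Xkb Ybk] [Xta Yta].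
      by rewrite /nw (ltn_trans Xta lt) (ltn_trans Ybk Ykta).
  have Ybka : Y bk < Y a.
    apply: nonadj => //.
    + by apply/negP => h; exact: nochain htkbk h.
    + by apply/negP => h; exact: nochain htaba h.
  apply: noc; apply: (mkc4 HM s0M rkM (sets_neq hul0 htkbk uk) hul0 htkbk _ hkl).
  move: (nwt _ _ htkbk) (nwt _ _ hua) => [Xkb Ybk] [Xua Yau].
  by rewrite /nw (leq_ltn_trans Xuk Xkb) (ltn_trans Ybka Yau).
Qed.
End Main.

Lemma perm_edgeE n (p : 'S_n) (i j : 'I_n) :
  perm_edge p i j = ((i < j) && (p j < p i)) || ((j < i) && (p i < p j)).
Proof.
rewrite /perm_edge.
move: (nat_of_ord i) (nat_of_ord j) (nat_of_ord (p i)) (nat_of_ord (p j)) => a b c d.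
apply/idP/idP => H; nia.
Qed.

Lemma sub_matching (T : finType) (e : rel T) (M : {set {set T}}) s t :
  matching e M -> s \in M -> t \in M -> matching e [set s; t].
Proof.
move=> [Me Md] sM tM; split.
- by move=> r; rewrite !inE => /orP [] /eqP ->; apply: Me.
- by move=> r r'; rewrite !inE => /orP [] /eqP -> /orP [] /eqP ->; apply: Md.
Qed.

Lemma sub_c4 (T : finType) (e : rel T) (M : {set {set T}}) s t :
  s \in M -> t \in M -> alt_cycle4 e [set s; t] -> alt_cycle4 e M.
Proof.
move=> sM tM [a [b [c [d [U E1 H1 H2]]]]]; exists a, b, c, d; split => //.
- by move: H1; rewrite !inE => /orP [] /eqP ->.
- by move: H2; rewrite !inE => /orP [] /eqP ->.
Qed.

Theorem theorem5 (T : finType) (e : rel T) (M : {set {set T}}) :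
  symmetric e -> irreflexive e ->
  permutation_graph e -> bipartite e ->
  matching e M ->
  (uniquely_restricted e M <-> ~ alt_cycle4 e M) /\
  (~ alt_cycle4 e M <->
     (forall s t, s \in M -> t \in M -> uniquely_restricted e [set s; t])).
Proof.
move=> esym eirr [n [p [f [fbij Hef]]]] [A HA] HM.
pose X v := nat_of_ord (f v).
pose Y v := nat_of_ord (p (f v)).
have Xinj : injective X by move=> x y /val_inj /(bij_inj fbij).
have Yinj : injective Y by move=> x y /val_inj /perm_inj /(bij_inj fbij).
have eE : forall x y, e x y = nw X Y x y || nw X Y y x.
  by move=> x y; rewrite Hef perm_edgeE.
have nochain : forall x y z, nw X Y x y -> nw X Y y z -> False.
  move=> x y z /andP [h1 h2] /andP [h3 h4].
  have hxz : nw X Y x z by rewrite /nw (ltn_trans h1 h3) (ltn_trans h4 h2).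
  have exy : e x y by rewrite eE /nw h1 h2.
  have eyz : e y z by rewrite eE /nw h3 h4.
  have exz : e x z by rewrite eE hxz.
  move: (HA _ _ exy) (HA _ _ eyz) (HA _ _ exz).
  by case: (x \in A); case: (y \in A); case: (z \in A).
have ur N : matching e N -> ~ alt_cycle4 e N -> uniquely_restricted e N.
  move=> HN nc; split => // N' HN' Hc.
  exact: (main esym Xinj Yinj eE nochain HN nc HN' Hc).
split; split.
- by move=> H c4; exact: (swap_c4 HM c4 H).
- exact: ur.
- move=> nc s t sM tM; apply: ur; first exact: sub_matching HM sM tM.
  by move=> c4; apply: nc; exact: sub_c4 sM tM c4.
- move=> H [a [b [c [d [U E1 H1 H2]]]]].
  have c4 : alt_cycle4 e [set [set a; b]; [set c; d]].
    by exists a, b, c, d; split; rewrite // !inE eqxx ?orbT.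
  exact: (swap_c4 (sub_matching HM H1 H2) c4 (H _ _ H1 H2)).
Qed.
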